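(* Let $L$ and $N$ be positive integers with $N\le L$, and let $U$ be real with $L > \frac{8}{U}$. Consider the Lieb-Wu equations with one down spin in the unknowns $k_1,\dots,k_N$ and $\Lambda$: $$e^{i k_j L} = \frac{\Lambda - \sin k_j - iU/4}{\Lambda - \sin k_j + iU/4},\quad j=1,\dots,N,\qquad \prod_{j=1}^N \frac{\Lambda - \sin k_j - iU/4}{\Lambda - \sin k_j + iU/4} = 1.$$ Then there are precisely $\binom{L}{N}(N-1)$ solutions with all $k_j$ real. More precisely, to every choice of $N$ mutually distinct intervals $\mathcal{I}_j = [(\ell_j-1)\frac{2\pi}{L}, \ell_j\frac{2\pi}{L}]$, $j=1,\dots,N$, with $\ell_j\in\{1,\dots,L\}$ and $\ell_j\ne\ell_k$ for $j\neq k$, there correspond exactly $N-1$ solutions with $k_j\in\mathcal{I}_j$ for all $j$, and these solutions are characterized by $N-1$ different values of $\Lambda$.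
   Context: Solutions are counted modulo permutations of the $k_j$, with the $k_j$ required to be mutually distinct and taken in $[0,2\pi)$ (they matter only modulo $2\pi$), and with $\Lambda$ a finite real number ($\Lambda=\pm\infty$ excluded). *)

(* Defs.v *)
From Stdlib Require Import Reals.
From Coquelicot Require Import Coquelicot.
From mathcomp Require binomial.

Open Scope R_scope.

Definition expi (t : R) : C := (cos t, sin t).

Definition lw_ratio (U Λ k : R) : C :=
  ((RtoC (Λ - sin k) - Ci * RtoC (U / 4)) / (RtoC (Λ - sin k) + Ci * RtoC (U / 4)))%C.

Fixpoint Cprod (n : nat) (f : nat -> C) : C :=
  match n with
  | O => RtoC 1
  | S m => (Cprod m f * f m)%C
  end.

(* Lieb-Wu equations with one down spin, unknowns k_0..k_{N-1} (indices
   shifted by one w.r.t. the paper) and Λ. *)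
Definition LiebWu (L N : nat) (U : R) (k : nat -> R) (Λ : R) : Prop :=
  (forall j, (j < N)%nat -> expi (k j * INR L) = lw_ratio U Λ (k j)) /\
  Cprod N (fun j => lw_ratio U Λ (k j)) = RtoC 1.

Definition real_solution (L N : nat) (U : R) (k : nat -> R) (Λ : R) : Prop :=
  (forall j, (j < N)%nat -> 0 <= k j < 2 * PI) /\
  (forall j j', (j < N)%nat -> (j' < N)%nat -> j <> j' -> k j <> k j') /\
  LiebWu L N U k Λ.

(* canonical representative modulo permutations: k_0 < k_1 < ... < k_{N-1} *)
Definition sorted_real_solution (L N : nat) (U : R) (k : nat -> R) (Λ : R) : Prop :=
  real_solution L N U k Λ /\ (forall j, (S j < N)%nat -> k j < k (S j)).

Definition has_exactly (N n : nat) (P : (nat -> R) -> R -> Prop) : Prop :=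
  exists (ks : nat -> nat -> R) (Λs : nat -> R),
    (forall i, (i < n)%nat -> P (ks i) (Λs i)) /\
    (forall i i', (i < n)%nat -> (i' < n)%nat -> i <> i' ->
        ~ (Λs i = Λs i' /\ forall j, (j < N)%nat -> ks i j = ks i' j)) /\
    (forall k Λ, P k Λ ->
        exists i, (i < n)%nat /\ Λ = Λs i /\ forall j, (j < N)%nat -> k j = ks i j).

Definition in_interval (L l : nat) (x : R) : Prop :=
  (INR l - 1) * (2 * PI / INR L) <= x <= INR l * (2 * PI / INR L).

(* Main.v *)
Require Import Defs.
From Stdlib Require Import Reals.
From Coquelicot Require Import Coquelicot.
From mathcomp Require binomial.
From Stdlib Require Import Lra Lia ZArith ClassicalEpsilon.

Open Scope R_scope.


Definition Lph (U a : R) : R := PI - 2 * atan (a / (U / 4)).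

Lemma Lph_bounds U a : 0 < Lph U a < 2 * PI.
Proof. unfold Lph. pose proof (atan_bound (a / (U/4))). lra. Qed.

Lemma expi_add a b : (expi a * expi b)%C = expi (a + b).
Proof.
  unfold expi, Cmult; simpl. rewrite cos_plus, sin_plus.
  apply injective_projections; simpl; ring.
Qed.

Lemma lw_ratio_expi U Λ k : 0 < U -> lw_ratio U Λ k = expi (- Lph U (Λ - sin k)).
Proof.
  intros hU. unfold lw_ratio, expi, Lph.
  set (a := Λ - sin k). set (v := U / 4).
  assert (hv : 0 < v) by (unfold v; lra).
  set (x := a / v).
  assert (ha : a = x * v) by (unfold x; field; lra).
  set (t := atan x).
  assert (hc : cos (- (PI - 2 * t)) = (x*x - 1) / (1 + x*x)).
  { rewrite cos_neg. replace (PI - 2*t) with (PI + (- (t + t))) by ring.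
    rewrite cos_plus, sin_PI, cos_PI, cos_neg, cos_plus. unfold t.
    rewrite cos_atan, sin_atan.
    assert (hs : sqrt (1 + x²) * sqrt (1 + x²) = 1 + x*x).
    { rewrite sqrt_sqrt. unfold Rsqr; ring. unfold Rsqr; nra. }
    assert (hpos : 0 < sqrt (1 + x²)). { apply sqrt_lt_R0. unfold Rsqr; nra. }
    field_simplify; [| nra | lra].
    replace (sqrt (1 + x²) ^ 2) with (1 + x*x) by (rewrite <- hs; ring). field. nra. }
  assert (hsn : sin (- (PI - 2 * t)) = - (2 * x) / (1 + x*x)).
  { rewrite sin_neg. replace (PI - 2*t) with (PI + (- (t + t))) by ring.
    rewrite sin_plus, sin_PI, cos_PI, sin_neg, sin_plus. unfold t.
    rewrite cos_atan, sin_atan.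
    assert (hs : sqrt (1 + x²) * sqrt (1 + x²) = 1 + x*x).
    { rewrite sqrt_sqrt. unfold Rsqr; ring. unfold Rsqr; nra. }
    assert (hpos : 0 < sqrt (1 + x²)). { apply sqrt_lt_R0. unfold Rsqr; nra. }
    field_simplify; try lra; try nra.
    replace (sqrt (1 + x²) ^ 2) with (1 + x*x) by (rewrite <- hs; ring). field. nra. }
  rewrite hc, hsn.
  unfold Cdiv, Cinv, Cmult, Cminus, Cplus, Copp, RtoC, Ci; simpl.
  rewrite ha.
  apply injective_projections; simpl; field; split; nra.
Qed.

Lemma cos_sin_2z (z : Z) : cos (2 * IZR z * PI) = 1 /\ sin (2 * IZR z * PI) = 0.
Proof.
  destruct z as [|p|p].
  - simpl. replace (2*0*PI) with 0 by ring. rewrite cos_0, sin_0. auto.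
  - assert (IZR (Z.pos p) = INR (Pos.to_nat p)) as E.
    { rewrite INR_IZR_INZ. rewrite positive_nat_Z. reflexivity. }
    rewrite E. pose proof (cos_period 0 (Pos.to_nat p)). pose proof (sin_period 0 (Pos.to_nat p)).
    rewrite Rplus_0_l in *. rewrite cos_0 in *. rewrite sin_0 in *. auto.
  - assert (IZR (Z.neg p) = - INR (Pos.to_nat p)) as E.
    { change (Z.neg p) with (- Z.pos p)%Z; rewrite opp_IZR, INR_IZR_INZ, positive_nat_Z. reflexivity. }
    rewrite E. pose proof (cos_period 0 (Pos.to_nat p)). pose proof (sin_period 0 (Pos.to_nat p)).
    rewrite Rplus_0_l in *. rewrite cos_0 in *. rewrite sin_0 in *.
    replace (2 * - INR (Pos.to_nat p) * PI) with (- (2 * INR (Pos.to_nat p) * PI)) by ring.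
    rewrite cos_neg, sin_neg. split; lra.
Qed.

Lemma expi_eq a b : expi a = expi b <-> exists z : Z, a = b + 2 * PI * IZR z.
Proof.
  split.
  - intros H. unfold expi in H. injection H as Hc Hs.
    assert (H0 : sin (a - b) = 0).
    { unfold Rminus. rewrite sin_plus, cos_neg, sin_neg, Hc, Hs. ring. }
    assert (H1 : cos (a - b) = 1).
    { unfold Rminus. rewrite cos_plus, cos_neg, sin_neg, Hc, Hs.
      pose proof (sin2_cos2 b). unfold Rsqr in *. lra. }
    destruct (sin_eq_0_0 _ H0) as [k Hk].
    destruct (Z.Even_or_Odd k) as [[q Hq]|[q Hq]]; subst k.
    + exists q. rewrite mult_IZR in Hk. lra.
    + exfalso. rewrite plus_IZR, mult_IZR in Hk. rewrite Hk in H1.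
      replace ((2 * IZR q + 1) * PI) with (2 * IZR q * PI + PI) in H1 by ring.
      rewrite cos_plus, cos_PI, sin_PI in H1. destruct (cos_sin_2z q) as [c s].
      rewrite c in H1. lra.
  - intros [z Hz]. subst a. unfold expi. destruct (cos_sin_2z z) as [c s].
    replace (2 * PI * IZR z) with (2 * IZR z * PI) by ring.
    rewrite cos_plus, sin_plus, c, s. apply injective_projections; simpl; ring.
Qed.

Lemma abs_bounds z w : Rabs z <= w -> - w <= z <= w.
Proof. unfold Rabs; destruct Rcase_abs; lra. Qed.

Lemma atan_lip x y : x <= y -> 0 <= atan y - atan x <= y - x.
Proof.
  intros H. destruct (Req_dec x y) as [->|Hne]. lra.
  assert (Hlt : x < y) by lra.
  destruct (MVT_cor1 atan x y derivable_pt_atan Hlt) as [c [Hc _]].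
  rewrite derive_pt_atan in Hc. rewrite Hc.
  assert (0 < 1 + c²) by (unfold Rsqr; nra).
  assert (0 < 1 / (1 + c²) <= 1).
  { split. apply Rdiv_lt_0_compat; lra.
    unfold Rdiv. rewrite Rmult_1_l. rewrite <- Rinv_1. apply Rinv_le_contravar. lra.
    unfold Rsqr; nra. }
  split; nra.
Qed.

Lemma sin_lip x y : x <= y -> Rabs (sin y - sin x) <= y - x.
Proof.
  intros H. destruct (Req_dec x y) as [->|Hne]. rewrite Rminus_diag, Rabs_R0. lra.
  assert (Hlt : x < y) by lra.
  destruct (MVT_cor1 sin x y derivable_sin Hlt) as [c [Hc _]].
  rewrite Hc. rewrite (pr_nu sin c _ (derivable_pt_sin c)), derive_pt_sin.
  rewrite Rabs_mult. rewrite (Rabs_right (y - x)) by lra.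
  pose proof (COS_bound c). assert (Rabs (cos c) <= 1) by (apply Rabs_le; lra). nra.
Qed.

Lemma lip_cont (f : R -> R) (C : R) : 0 <= C ->
  (forall x y, x < y -> Rabs (f y - f x) <= C * (y - x)) -> continuity f.
Proof.
  intros HC H x. unfold continuity_pt, continue_in, limit1_in, limit_in. simpl.
  intros eps Heps. exists (eps / (C + 1)). split.
  { apply Rdiv_lt_0_compat; lra. }
  intros y [_ Hy]. unfold R_dist in *.
  assert (HC1 : 0 < C + 1) by lra.
  assert (Hb : Rabs (f y - f x) <= C * Rabs (y - x)).
  { destruct (Rtotal_order x y) as [h|[h|h]].
    - rewrite (Rabs_right (y - x)) by lra. auto.
    - subst. rewrite !Rminus_diag, Rabs_R0. lra.
    - rewrite (Rabs_minus_sym (f y)), (Rabs_minus_sym y). rewrite (Rabs_right (x - y)) by lra.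
      auto. }
  assert (Hy2 : Rabs (y - x) * (C + 1) < eps).
  { apply (Rmult_lt_compat_r (C+1)) in Hy; [|lra].
    unfold Rdiv in Hy. rewrite Rmult_assoc, Rinv_l, Rmult_1_r in Hy; lra. }
  pose proof (Rabs_pos (y - x)). nra.
Qed.


Fixpoint rsum (n : nat) (f : nat -> R) : R :=
  match n with O => 0 | S m => rsum m f + f m end.

Lemma rsum_ext n f g : (forall j, (j < n)%nat -> f j = g j) -> rsum n f = rsum n g.
Proof. induction n; simpl; intros H; auto. rewrite IHn by (intros; apply H; lia). rewrite H by lia. auto. Qed.

Lemma Cprod_ext n f g : (forall j, (j < n)%nat -> f j = g j) -> Cprod n f = Cprod n g.
Proof. induction n; simpl; intros H; auto. rewrite IHn by (intros; apply H; lia). rewrite H by lia. auto. Qed.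

Lemma Cprod_expi n f : Cprod n (fun j => expi (f j)) = expi (rsum n f).
Proof.
  induction n; simpl.
  - unfold expi. rewrite cos_0, sin_0. reflexivity.
  - rewrite IHn, expi_add. reflexivity.
Qed.

Lemma rsum_le n f g : (forall j, (j < n)%nat -> f j <= g j) -> rsum n f <= rsum n g.
Proof. induction n; simpl; intros H. lra. pose proof (IHn (fun j h => H j ltac:(lia))). pose proof (H n ltac:(lia)). lra. Qed.

Lemma rsum_lt n f g : (1 <= n)%nat -> (forall j, (j < n)%nat -> f j < g j) -> rsum n f < rsum n g.
Proof.
  intros Hn H. destruct n. lia. simpl.
  pose proof (rsum_le n f g (fun j h => Rlt_le _ _ (H j ltac:(lia)))). pose proof (H n ltac:(lia)). lra.
Qed.

Lemma rsum_const n c : rsum n (fun _ => c) = INR n * c.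
Proof. induction n; simpl rsum. simpl; ring. rewrite IHn, S_INR. ring. Qed.

Lemma rsum_cont n (F : nat -> R -> R) : (forall j, (j < n)%nat -> continuity (F j)) ->
  continuity (fun x => rsum n (fun j => F j x)).
Proof.
  induction n; simpl; intros H.
  - apply continuity_const. intros a b; auto.
  - apply (continuity_plus (fun x => rsum n (fun j => F j x)) (F n)).
    apply IHn; intros; apply H; lia. apply H; lia.
Qed.



Definition gg (L : nat) (U Λ k : R) : R := k * INR L + Lph U (Λ - sin k).
Definition oint (L m : nat) (x : R) : Prop := 2 * PI * (INR m - 1) < x * INR L < 2 * PI * INR m.

Lemma L_pos L U : 0 < U -> 8 / U < INR L -> 0 < INR L.
Proof. intros. assert (0 < 8 / U) by (apply Rdiv_lt_0_compat; lra). lra. Qed.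

Lemma gg_mono L U Λ k k' : 0 < U -> k < k' ->
  (INR L - 8 / U) * (k' - k) <= gg L U Λ k' - gg L U Λ k <= (INR L + 8 / U) * (k' - k).
Proof.
  intros hU hk. unfold gg, Lph.
  set (b := (Λ - sin k) / (U / 4)). set (b' := (Λ - sin k') / (U / 4)).
  set (d := sin k' - sin k).
  assert (hd : - (k' - k) <= d <= k' - k) by (apply abs_bounds; apply sin_lip; lra).
  assert (hbb : b - b' = d * (4 / U)) by (unfold b, b', d; field; lra).
  assert (hw : 0 < 4 / U) by (apply Rdiv_lt_0_compat; lra).
  assert (ha : - ((k' - k) * (4 / U)) <= atan b - atan b' <= (k' - k) * (4 / U)).
  { destruct (Rle_or_lt b' b) as [h|h].
    - pose proof (atan_lip b' b h). nra.
    - pose proof (atan_lip b b' (Rlt_le _ _ h)). nra. }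
  replace (8 / U) with (2 * (4 / U)) by (field; lra).
  nra.
Qed.

Lemma gg_Lam L U Λ Λ' k : 0 < U -> Λ < Λ' ->
  0 < gg L U Λ k - gg L U Λ' k <= 8 / U * (Λ' - Λ).
Proof.
  intros hU hl. unfold gg, Lph.
  set (b := (Λ - sin k) / (U / 4)). set (b' := (Λ' - sin k) / (U / 4)).
  assert (hbb : b' - b = (Λ' - Λ) * (4 / U)) by (unfold b, b'; field; lra).
  assert (hw : 0 < 4 / U) by (apply Rdiv_lt_0_compat; lra).
  assert (b < b') by nra.
  pose proof (atan_increasing _ _ H). pose proof (atan_lip b b' (Rlt_le _ _ H)).
  replace (8 / U) with (2 * (4 / U)) by (field; lra). nra.
Qed.

Lemma gg_strict L U Λ k k' : 0 < U -> 8 / U < INR L -> k < k' -> gg L U Λ k < gg L U Λ k'.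
Proof. intros hU hLU hk. pose proof (gg_mono L U Λ k k' hU hk). nra. Qed.

Lemma gg_inj L U Λ x y : 0 < U -> 8 / U < INR L -> gg L U Λ x = gg L U Λ y -> x = y.
Proof.
  intros hU hLU H. destruct (Rtotal_order x y) as [h|[h|h]]; auto.
  - pose proof (gg_strict L U Λ _ _ hU hLU h). lra.
  - pose proof (gg_strict L U Λ _ _ hU hLU h). lra.
Qed.

Lemma gg_cont L U Λ : 0 < U -> 8 / U < INR L -> continuity (gg L U Λ).
Proof.
  intros hU hLU. apply (lip_cont _ (INR L + 8 / U)).
  { assert (0 < 8 / U) by (apply Rdiv_lt_0_compat; lra). lra. }
  intros x y h. pose proof (gg_mono L U Λ x y hU h). apply Rabs_le. nra.
Qed.

Lemma gg_root_ex L U Λ m : 0 < U -> 8 / U < INR L -> (1 <= m <= L)%nat ->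
  exists k, oint L m k /\ gg L U Λ k = 2 * PI * INR m.
Proof.
  intros hU hLU hm. pose proof (L_pos L U hU hLU) as hL.
  set (a := 2 * PI * (INR m - 1) / INR L). set (b := 2 * PI * INR m / INR L).
  assert (hab : a < b) by (unfold a, b; apply Rmult_lt_compat_r; [apply Rinv_0_lt_compat; lra| pose proof PI_RGT_0; lra]).
  assert (ga : gg L U Λ a = 2 * PI * (INR m - 1) + Lph U (Λ - sin a)) by (unfold gg, a; field; lra).
  assert (gb : gg L U Λ b = 2 * PI * INR m + Lph U (Λ - sin b)) by (unfold gg, b; field; lra).
  pose proof (Lph_bounds U (Λ - sin a)). pose proof (Lph_bounds U (Λ - sin b)).
  destruct (IVT (fun k => gg L U Λ k - 2 * PI * INR m) a b) as [z [hz1 hz2]]; auto.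
  - apply continuity_minus. apply gg_cont; auto. apply continuity_const. intros ? ?; auto.
  - simpl. lra.
  - simpl. lra.
  - exists z. split; [|lra].
    assert (z <> a) by (intro; subst; lra). assert (z <> b) by (intro; subst; lra).
    assert (a < z < b) by lra.
    unfold oint. unfold a, b in H3.
    destruct H3 as [h1 h2].
    split.
    + apply (Rmult_lt_compat_r (INR L)) in h1; auto. unfold Rdiv in h1.
      rewrite Rmult_assoc, Rinv_l, Rmult_1_r in h1; lra.
    + apply (Rmult_lt_compat_r (INR L)) in h2; auto. unfold Rdiv in h2.
      rewrite Rmult_assoc, Rinv_l, Rmult_1_r in h2; lra.
Qed.

Definition Kr (L : nat) (U : R) (m : nat) (Λ : R) : R :=
  epsilon (inhabits 0) (fun k => oint L m k /\ gg L U Λ k = 2 * PI * INR m).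

Lemma Kr_spec L U m Λ : 0 < U -> 8 / U < INR L -> (1 <= m <= L)%nat ->
  oint L m (Kr L U m Λ) /\ gg L U Λ (Kr L U m Λ) = 2 * PI * INR m.
Proof. intros. unfold Kr. apply epsilon_spec. apply gg_root_ex; auto. Qed.

Lemma Kr_unique L U m Λ k : 0 < U -> 8 / U < INR L -> (1 <= m <= L)%nat ->
  gg L U Λ k = 2 * PI * INR m -> k = Kr L U m Λ.
Proof.
  intros hU hLU hm H. destruct (Kr_spec L U m Λ hU hLU hm) as [_ H2].
  apply (gg_inj L U Λ); auto. congruence.
Qed.

Lemma Kr_lip L U m Λ Λ' : 0 < U -> 8 / U < INR L -> (1 <= m <= L)%nat -> Λ < Λ' ->
  0 < Kr L U m Λ' - Kr L U m Λ <= 8 / U / (INR L - 8 / U) * (Λ' - Λ).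
Proof.
  intros hU hLU hm hl.
  destruct (Kr_spec L U m Λ hU hLU hm) as [_ H1].
  destruct (Kr_spec L U m Λ' hU hLU hm) as [_ H2].
  set (k := Kr L U m Λ) in *. set (k' := Kr L U m Λ') in *.
  pose proof (gg_Lam L U Λ Λ' k hU hl).
  assert (hc : 0 < INR L - 8 / U) by lra.
  assert (hkk : k < k').
  { destruct (Rlt_or_le k k') as [h|h]; auto.
    destruct (Req_dec k k') as [e|ne].
    - rewrite <- e in H2. lra.
    - assert (k' < k) by lra. pose proof (gg_strict L U Λ' k' k hU hLU H0). lra. }
  pose proof (gg_mono L U Λ' k k' hU hkk).
  split. lra.
  assert ((INR L - 8 / U) * (k' - k) <= 8 / U * (Λ' - Λ)) by lra.
  revert H3 hc. generalize (8 / U). intros w H3 hc. set (c := INR L - w) in *.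
  replace (w / c * (Λ' - Λ)) with ((w * (Λ' - Λ)) * / c) by (field; lra).
  replace (k' - k) with ((c * (k' - k)) * / c) by (field; lra).
  apply Rmult_le_compat_r; [left; apply Rinv_0_lt_compat; lra | lra].
Qed.

Lemma Kr_cont L U m : 0 < U -> 8 / U < INR L -> (1 <= m <= L)%nat -> continuity (Kr L U m).
Proof.
  intros hU hLU hm. apply (lip_cont _ (8 / U / (INR L - 8 / U))).
  { apply Rlt_le. apply Rdiv_lt_0_compat. apply Rdiv_lt_0_compat; lra. lra. }
  intros x y h. pose proof (Kr_lip L U m x y hU hLU hm h). apply Rabs_le. nra.
Qed.


Lemma izr_between a b : IZR a - 1 < IZR b < IZR a + 1 -> a = b.
Proof.
  intros [h1 h2].
  assert (IZR (a - 1) < IZR b) by (rewrite minus_IZR; simpl; lra).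
  assert (IZR b < IZR (a + 1)) by (rewrite plus_IZR; simpl; lra).
  apply lt_IZR in H. apply lt_IZR in H0. lia.
Qed.

Lemma pi2_lt a b : 2 * PI * a < 2 * PI * b -> a < b.
Proof. intros h. pose proof PI_RGT_0. apply (Rmult_lt_reg_l (2 * PI)); lra. Qed.

Lemma pi2_le a b : 2 * PI * a <= 2 * PI * b -> a <= b.
Proof. intros h. pose proof PI_RGT_0. apply (Rmult_le_reg_l (2 * PI)); lra. Qed.

Lemma eq1_iff L U Λ k : 0 < U ->
  (expi (k * INR L) = lw_ratio U Λ k <-> exists z : Z, gg L U Λ k = 2 * PI * IZR z).
Proof.
  intros hU. rewrite lw_ratio_expi by auto. rewrite expi_eq. unfold gg.
  split; intros [z hz]; exists z; lra.
Qed.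

Lemma rsum_opp n f : rsum n (fun j => - f j) = - rsum n f.
Proof. induction n; simpl. ring. rewrite IHn. ring. Qed.

Lemma prod_iff N U Λ (k : nat -> R) : 0 < U ->
  (Cprod N (fun j => lw_ratio U Λ (k j)) = RtoC 1 <->
   exists z : Z, rsum N (fun j => Lph U (Λ - sin (k j))) = 2 * PI * IZR z).
Proof.
  intros hU.
  rewrite (Cprod_ext N _ (fun j => expi (- Lph U (Λ - sin (k j))))) by (intros; apply lw_ratio_expi; auto).
  rewrite Cprod_expi, rsum_opp.
  replace (RtoC 1) with (expi 0) by (unfold expi; rewrite cos_0, sin_0; reflexivity).
  rewrite expi_eq. split; intros [z hz].
  - exists (- z)%Z. rewrite opp_IZR. lra.
  - exists (- z)%Z. rewrite opp_IZR. lra.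
Qed.

Lemma INR_IZR m : INR m = IZR (Z.of_nat m).
Proof. apply INR_IZR_INZ. Qed.

Lemma comp_index L U Λ k : 0 < U -> 8 / U < INR L ->
  expi (k * INR L) = lw_ratio U Λ k -> 0 <= k < 2 * PI ->
  exists m : nat, (1 <= m <= L)%nat /\ oint L m k /\ gg L U Λ k = 2 * PI * INR m.
Proof.
  intros hU hLU He hk. pose proof (L_pos L U hU hLU) as hL.
  apply (eq1_iff L U Λ k hU) in He. destruct He as [z hz].
  pose proof (Lph_bounds U (Λ - sin k)). unfold gg in hz.
  assert (0 <= k * INR L < 2 * PI * INR L) by (split; nra).
  assert (hz1 : 0 < IZR z) by (apply pi2_lt; lra).
  assert (hz2 : IZR z < INR L + 1) by (apply pi2_lt; lra).
  apply lt_IZR in hz1. rewrite INR_IZR in hz2.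
  assert (IZR z < IZR (Z.of_nat L + 1)) by (rewrite plus_IZR; simpl; lra).
  apply lt_IZR in H1.
  exists (Z.to_nat z).
  assert (hm : INR (Z.to_nat z) = IZR z) by (rewrite INR_IZR, Z2Nat.id by lia; reflexivity).
  split; [lia|]. rewrite hm. unfold oint, gg. rewrite hm. split; lra.
Qed.

Lemma sol_eq_index L U Λ k m : 0 < U ->
  expi (k * INR L) = lw_ratio U Λ k -> oint L m k -> gg L U Λ k = 2 * PI * INR m.
Proof.
  intros hU He ho. apply (eq1_iff L U Λ k hU) in He. destruct He as [z hz].
  pose proof (Lph_bounds U (Λ - sin k)). unfold oint in ho. unfold gg in *.
  rewrite (INR_IZR m) in *.
  assert (Z.of_nat m = z).
  { apply izr_between. split; apply pi2_lt; lra. }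
  subst z. lra.
Qed.

Lemma oint_unique L m m' x : oint L m x -> oint L m' x -> m = m'.
Proof.
  unfold oint. intros h1 h2. rewrite !INR_IZR in *.
  apply Nat2Z.inj. apply izr_between. split; apply pi2_lt; lra.
Qed.

Lemma oint_lt L m m' x y : 0 < INR L -> oint L m x -> oint L m' y -> x < y -> (m <= m')%nat.
Proof.
  unfold oint. intros hL h1 h2 hxy.
  destruct (Nat.le_gt_cases m m') as [h|h]; auto. exfalso.
  assert (S m' <= m)%nat by lia. apply le_INR in H. rewrite S_INR in H.
  pose proof PI_RGT_0.
  assert (x * INR L < y * INR L) by (apply Rmult_lt_compat_r; auto).
  assert (2 * PI * INR m' <= 2 * PI * (INR m - 1)) by (apply Rmult_le_compat_l; lra).
  lra.
Qed.

Lemma oint_closed L m x : 0 < INR L -> oint L m x -> in_interval L m x.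
Proof.
  unfold oint, in_interval. intros hL [h1 h2].
  replace ((INR m - 1) * (2 * PI / INR L)) with (2 * PI * (INR m - 1) / INR L) by (field; lra).
  replace (INR m * (2 * PI / INR L)) with (2 * PI * INR m / INR L) by (field; lra).
  split. apply (Rle_div_l _ _ _ hL); lra. apply (Rle_div_r _ _ _ hL); lra.
Qed.

Lemma closed_oint L l m x : 0 < INR L -> in_interval L l x -> oint L m x -> l = m.
Proof.
  unfold oint, in_interval. intros hL [h1 h2] [h3 h4].
  replace ((INR l - 1) * (2 * PI / INR L)) with (2 * PI * (INR l - 1) / INR L) in h1 by (field; lra).
  replace (INR l * (2 * PI / INR L)) with (2 * PI * INR l / INR L) in h2 by (field; lra).
  apply (Rle_div_l _ _ _ hL) in h1. apply (Rle_div_r _ _ _ hL) in h2.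
  rewrite !INR_IZR in *. apply Nat2Z.inj. apply izr_between. split; apply pi2_lt; lra.
Qed.

Lemma oint_range L m x : 0 < INR L -> (1 <= m <= L)%nat -> oint L m x -> 0 < x < 2 * PI.
Proof.
  unfold oint. intros hL hm [h1 h2].
  assert (1 <= INR m) by (apply (le_INR 1); lia).
  assert (INR m <= INR L) by (apply le_INR; lia).
  pose proof PI_RGT_0.
  split; nra.
Qed.


Definition Sf (L N : nat) (U : R) (l : nat -> nat) (Λ : R) : R :=
  rsum N (fun j => 2 * PI * INR (l j) - Kr L U (l j) Λ * INR L).

Lemma Sf_eq L N U l Λ : 0 < U -> 8 / U < INR L -> (forall j, (j < N)%nat -> (1 <= l j <= L)%nat) ->
  Sf L N U l Λ = rsum N (fun j => Lph U (Λ - sin (Kr L U (l j) Λ))).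
Proof.
  intros hU hLU hl. unfold Sf. apply rsum_ext. intros j hj.
  destruct (Kr_spec L U (l j) Λ hU hLU (hl j hj)) as [_ h]. unfold gg in h. lra.
Qed.

Lemma Sf_dec L N U l Λ Λ' : 0 < U -> 8 / U < INR L -> (1 <= N)%nat ->
  (forall j, (j < N)%nat -> (1 <= l j <= L)%nat) -> Λ < Λ' -> Sf L N U l Λ' < Sf L N U l Λ.
Proof.
  intros hU hLU hN hl hlt. unfold Sf. apply rsum_lt; auto. intros j hj.
  pose proof (Kr_lip L U (l j) Λ Λ' hU hLU (hl j hj) hlt). pose proof (L_pos L U hU hLU).
  nra.
Qed.

Lemma Sf_inj L N U l Λ Λ' : 0 < U -> 8 / U < INR L -> (1 <= N)%nat ->
  (forall j, (j < N)%nat -> (1 <= l j <= L)%nat) -> Sf L N U l Λ = Sf L N U l Λ' -> Λ = Λ'.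
Proof.
  intros hU hLU hN hl H. destruct (Rtotal_order Λ Λ') as [h|[h|h]]; auto.
  - pose proof (Sf_dec L N U l _ _ hU hLU hN hl h). lra.
  - pose proof (Sf_dec L N U l _ _ hU hLU hN hl h). lra.
Qed.

Lemma Sf_cont L N U l : 0 < U -> 8 / U < INR L ->
  (forall j, (j < N)%nat -> (1 <= l j <= L)%nat) -> continuity (Sf L N U l).
Proof.
  intros hU hLU hl. unfold Sf.
  apply (rsum_cont N (fun j Λ => 2 * PI * INR (l j) - Kr L U (l j) Λ * INR L)).
  intros j hj.
  apply (continuity_minus (fun _ => 2 * PI * INR (l j)) (fun Λ => Kr L U (l j) Λ * INR L)).
  apply continuity_const. intros ? ?; auto.
  apply (continuity_mult (Kr L U (l j)) (fun _ => INR L)).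
  apply Kr_cont; auto. apply continuity_const. intros ? ?; auto.
Qed.

Definition th (N : nat) : R := PI / 2 - PI / (2 * INR N).

Lemma th_bounds N : (1 <= N)%nat -> - (PI / 2) < th N < PI / 2.
Proof.
  intros hN. unfold th. pose proof PI_RGT_0.
  assert (1 <= INR N) by (apply (le_INR 1); lia).
  assert (0 < PI / (2 * INR N)) by (apply Rdiv_lt_0_compat; lra).
  assert (PI / (2 * INR N) <= PI / 2).
  { unfold Rdiv. apply Rmult_le_compat_l. lra. apply Rinv_le_contravar; lra. }
  lra.
Qed.

Lemma atan_le x y : x <= y -> atan x <= atan y.
Proof. intros h. destruct (Req_dec x y) as [->|ne]. lra. left. apply atan_increasing. lra. Qed.

Lemma Lph_small U N a : 0 < U -> (1 <= N)%nat -> U / 4 * tan (th N) <= a -> Lph U a < 2 * PI / INR N.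
Proof.
  intros hU hN ha. unfold Lph.
  assert (tan (th N) <= a / (U / 4)).
  { assert (hq : U / 4 > 0) by lra. apply (Rle_div_r (tan (th N)) a (U / 4) hq). lra. }
  apply atan_le in H. rewrite atan_tan in H by (apply th_bounds; auto).
  unfold th in H. assert (1 <= INR N) by (apply (le_INR 1); lia).
  assert (PI / INR N < 2 * PI / INR N).
  { unfold Rdiv. apply Rmult_lt_compat_r. apply Rinv_0_lt_compat; lra. pose proof PI_RGT_0; lra. }
  replace (PI / (2 * INR N)) with (PI / INR N / 2) in H by (field; lra). lra.
Qed.

Lemma Lph_big U N a : 0 < U -> (1 <= N)%nat -> a <= - (U / 4 * tan (th N)) -> 2 * PI - 2 * PI / INR N < Lph U a.
Proof.
  intros hU hN ha. unfold Lph.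
  assert (a / (U / 4) <= - tan (th N)).
  { assert (hq : U / 4 > 0) by lra. apply (Rle_div_l a (- tan (th N)) (U / 4) hq). lra. }
  apply atan_le in H. rewrite atan_opp, atan_tan in H by (apply th_bounds; auto).
  unfold th in H. assert (1 <= INR N) by (apply (le_INR 1); lia).
  assert (PI / INR N < 2 * PI / INR N).
  { unfold Rdiv. apply Rmult_lt_compat_r. apply Rinv_0_lt_compat; lra. pose proof PI_RGT_0; lra. }
  replace (PI / (2 * INR N)) with (PI / INR N / 2) in H by (field; lra). lra.
Qed.

Lemma Sf_hi L N U l : 0 < U -> 8 / U < INR L -> (1 <= N)%nat ->
  (forall j, (j < N)%nat -> (1 <= l j <= L)%nat) -> Sf L N U l (1 + U / 4 * tan (th N)) < 2 * PI.
Proof.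
  intros hU hLU hN hl. rewrite Sf_eq by auto.
  assert (1 <= INR N) by (apply (le_INR 1); lia).
  replace (2 * PI) with (INR N * (2 * PI / INR N)) by (field; lra).
  rewrite <- rsum_const. apply rsum_lt; auto. intros j hj. apply Lph_small; auto.
  pose proof (SIN_bound (Kr L U (l j) (1 + U / 4 * tan (th N)))). lra.
Qed.

Lemma Sf_lo L N U l : 0 < U -> 8 / U < INR L -> (1 <= N)%nat ->
  (forall j, (j < N)%nat -> (1 <= l j <= L)%nat) -> 2 * PI * (INR N - 1) < Sf L N U l (- 1 - U / 4 * tan (th N)).
Proof.
  intros hU hLU hN hl. rewrite Sf_eq by auto.
  assert (1 <= INR N) by (apply (le_INR 1); lia).
  replace (2 * PI * (INR N - 1)) with (INR N * (2 * PI - 2 * PI / INR N)) by (field; lra).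
  rewrite <- rsum_const. apply rsum_lt; auto. intros j hj. apply Lph_big; auto.
  pose proof (SIN_bound (Kr L U (l j) (- 1 - U / 4 * tan (th N)))). lra.
Qed.

Lemma Sf_bounds L N U l Λ : 0 < U -> 8 / U < INR L -> (1 <= N)%nat ->
  (forall j, (j < N)%nat -> (1 <= l j <= L)%nat) -> 0 < Sf L N U l Λ < 2 * PI * INR N.
Proof.
  intros hU hLU hN hl. rewrite Sf_eq by auto. split.
  - replace 0 with (INR N * 0) by ring. rewrite <- rsum_const. apply rsum_lt; auto.
    intros j hj. apply Lph_bounds.
  - rewrite Rmult_comm. rewrite <- rsum_const. apply rsum_lt; auto.
    intros j hj. apply Lph_bounds.
Qed.

Lemma Lam_ex L N U l m : 0 < U -> 8 / U < INR L -> (1 <= N)%nat ->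
  (forall j, (j < N)%nat -> (1 <= l j <= L)%nat) -> (1 <= m <= N - 1)%nat ->
  exists Λ, Sf L N U l Λ = 2 * PI * INR m.
Proof.
  intros hU hLU hN hl hm.
  set (a := - 1 - U / 4 * tan (th N)). set (b := 1 + U / 4 * tan (th N)).
  pose proof (Sf_hi L N U l hU hLU hN hl) as Hb. pose proof (Sf_lo L N U l hU hLU hN hl) as Ha.
  fold a in Ha. fold b in Hb.
  assert (h1 : 1 <= INR m) by (apply (le_INR 1); lia).
  assert (h2 : INR m <= INR N - 1).
  { replace (INR N - 1) with (INR (N - 1)) by (rewrite minus_INR by lia; simpl; ring). apply le_INR; lia. }
  pose proof PI_RGT_0.
  assert (2 * PI <= 2 * PI * INR m) by nra.
  assert (2 * PI * INR m <= 2 * PI * (INR N - 1)) by nra.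
  assert (hab : a < b).
  { destruct (Rlt_or_le a b) as [h|h]; auto.
    destruct (Req_dec a b) as [e|ne]. rewrite e in Ha. lra.
    pose proof (Sf_dec L N U l b a hU hLU hN hl ltac:(lra)). lra. }
  destruct (IVT (fun Λ => 2 * PI * INR m - Sf L N U l Λ) a b) as [z [_ hz]]; auto.
  - apply (continuity_minus (fun _ => 2 * PI * INR m) (Sf L N U l)).
    apply continuity_const. intros ? ?; auto. apply Sf_cont; auto.
  - simpl. lra.
  - simpl. lra.
  - exists z. lra.
Qed.

Definition Lam L N U l (m : nat) : R :=
  epsilon (inhabits 0) (fun Λ => Sf L N U l Λ = 2 * PI * INR m).

Theorem core L N U (l : nat -> nat) : 0 < U -> 8 / U < INR L -> (1 <= N)%nat ->
  (forall j, (j < N)%nat -> (1 <= l j <= L)%nat) ->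
  (forall j j', (j < N)%nat -> (j' < N)%nat -> j <> j' -> l j <> l j') ->
  exists (ks : nat -> nat -> R) (Λs : nat -> R),
    (forall i, (i < N - 1)%nat -> real_solution L N U (ks i) (Λs i) /\
        forall j, (j < N)%nat -> oint L (l j) (ks i j)) /\
    (forall i i', (i < N - 1)%nat -> (i' < N - 1)%nat -> i <> i' -> Λs i <> Λs i') /\
    (forall k Λ, real_solution L N U k Λ -> (forall j, (j < N)%nat -> oint L (l j) (k j)) ->
       exists i, (i < N - 1)%nat /\ Λ = Λs i /\ forall j, (j < N)%nat -> k j = ks i j).
Proof.
  intros hU hLU hN hl hd. pose proof (L_pos L U hU hLU) as hL.
  set (Λs := fun i => Lam L N U l (S i)).
  set (ks := fun i j => Kr L U (l j) (Λs i)).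
  assert (HS : forall i, (i < N - 1)%nat -> Sf L N U l (Λs i) = 2 * PI * INR (S i)).
  { intros i hi. unfold Λs, Lam. apply epsilon_spec. apply Lam_ex; auto. lia. }
  exists ks, Λs. split; [|split].
  - intros i hi. split.
    + split; [|split].
      * intros j hj. pose proof (oint_range L (l j) (ks i j) hL (hl j hj)).
        destruct (Kr_spec L U (l j) (Λs i) hU hLU (hl j hj)) as [ho _]. specialize (H ho). lra.
      * intros j j' hj hj' hne heq. apply (hd j j' hj hj' hne).
        destruct (Kr_spec L U (l j) (Λs i) hU hLU (hl j hj)) as [ho _].
        destruct (Kr_spec L U (l j') (Λs i) hU hLU (hl j' hj')) as [ho' _].
        fold (ks i j) in ho. fold (ks i j') in ho'. rewrite heq in ho.
        apply (oint_unique L _ _ _ ho ho').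
      * split.
        -- intros j hj. apply (eq1_iff L U (Λs i) (ks i j) hU). exists (Z.of_nat (l j)).
           destruct (Kr_spec L U (l j) (Λs i) hU hLU (hl j hj)) as [_ h].
           rewrite <- INR_IZR. exact h.
        -- apply (prod_iff N U (Λs i) (ks i) hU). exists (Z.of_nat (S i)).
           rewrite <- INR_IZR. rewrite <- HS by auto. rewrite Sf_eq by auto. reflexivity.
    + intros j hj. apply (Kr_spec L U (l j) (Λs i) hU hLU (hl j hj)).
  - intros i i' hi hi' hne heq. pose proof (HS i hi). pose proof (HS i' hi').
    rewrite heq in H. rewrite H in H0.
    assert (INR (S i) = INR (S i')) by (pose proof PI_RGT_0; nra).
    apply INR_eq in H1. lia.
  - intros k Λ [hr [hdk [he hp]]] ho.
    assert (hk : forall j, (j < N)%nat -> k j = Kr L U (l j) Λ).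
    { intros j hj. apply Kr_unique; auto. apply sol_eq_index; auto. }
    apply (prod_iff N U Λ k hU) in hp. destruct hp as [z hz].
    rewrite (rsum_ext N _ (fun j => Lph U (Λ - sin (Kr L U (l j) Λ)))) in hz
      by (intros j hj; rewrite hk; auto).
    rewrite <- Sf_eq in hz by auto.
    pose proof (Sf_bounds L N U l Λ hU hLU hN hl) as hb.
    rewrite hz in hb. rewrite INR_IZR in hb.
    assert (0 < IZR z) by (apply pi2_lt; lra).
    assert (IZR z < IZR (Z.of_nat N)) by (apply pi2_lt; lra).
    apply lt_IZR in H. apply lt_IZR in H0.
    exists (Z.to_nat z - 1)%nat. split; [lia|].
    assert (HSi := HS (Z.to_nat z - 1)%nat ltac:(lia)).
    replace (S (Z.to_nat z - 1)) with (Z.to_nat z) in HSi by lia.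
    rewrite INR_IZR, Z2Nat.id in HSi by lia.
    assert (Λ = Λs (Z.to_nat z - 1)%nat).
    { apply (Sf_inj L N U l); auto. congruence. }
    split; auto. intros j hj. rewrite hk by auto. unfold ks. rewrite <- H1. reflexivity.
Qed.


Lemma he_ext N n (P Q : (nat -> R) -> R -> Prop) :
  (forall k Λ, P k Λ <-> Q k Λ) -> has_exactly N n P -> has_exactly N n Q.
Proof.
  intros hPQ [ks [Λs [h1 [h2 h3]]]]. exists ks, Λs. split; [|split]; auto.
  - intros i hi. apply hPQ. auto.
  - intros k Λ hq. apply h3. apply hPQ. auto.
Qed.

Lemma he_zero N (P : (nat -> R) -> R -> Prop) : (forall k Λ, ~ P k Λ) -> has_exactly N 0 P.
Proof.
  intros h. exists (fun _ _ => 0), (fun _ => 0). split; [|split].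
  - intros i hi. lia.
  - intros i i' hi. lia.
  - intros k Λ hp. exfalso. apply (h k Λ hp).
Qed.

Lemma he_union N a b (P Q : (nat -> R) -> R -> Prop) :
  has_exactly N a P -> has_exactly N b Q ->
  (forall k k' Λ, (forall j, (j < N)%nat -> k j = k' j) -> P k Λ -> Q k' Λ -> False) ->
  has_exactly N (a + b) (fun k Λ => P k Λ \/ Q k Λ).
Proof.
  intros [ks1 [Λs1 [p1 [d1 c1]]]] [ks2 [Λs2 [p2 [d2 c2]]]] hdis.
  exists (fun i => if Nat.ltb i a then ks1 i else ks2 (i - a)%nat),
         (fun i => if Nat.ltb i a then Λs1 i else Λs2 (i - a)%nat).
  split; [|split].
  - intros i hi. destruct (Nat.ltb_spec i a).
    + left. apply p1. auto.
    + right. apply p2. lia.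
  - intros i i' hi hi' hne [hΛ hk].
    destruct (Nat.ltb_spec i a); destruct (Nat.ltb_spec i' a).
    + apply (d1 i i' H H0 hne). auto.
    + apply (hdis (ks1 i) (ks2 (i' - a)%nat) (Λs1 i));
        [exact hk | apply p1; exact H | rewrite hΛ; apply p2; lia].
    + apply (hdis (ks1 i') (ks2 (i - a)%nat) (Λs1 i'));
        [intros j hj; symmetry; auto | apply p1; exact H0 | rewrite <- hΛ; apply p2; lia].
    + apply (d2 (i - a)%nat (i' - a)%nat); try lia. auto.
  - intros k Λ [hp|hq].
    + destruct (c1 k Λ hp) as [i [hi [e1 e2]]]. exists i. split; [lia|].
      destruct (Nat.ltb_spec i a); [|lia]. auto.
    + destruct (c2 k Λ hq) as [i [hi [e1 e2]]]. exists (a + i)%nat. split; [lia|].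
      destruct (Nat.ltb_spec (a + i) a); [lia|].
      replace (a + i - a)%nat with i by lia. auto.
Qed.

Lemma incr_nat (t : nat -> nat) n N : (forall j, (n <= j)%nat -> (S j < N)%nat -> (t j < t (S j))%nat) ->
  forall j j', (n <= j)%nat -> (j < j')%nat -> (j' < N)%nat -> (t j < t j')%nat.
Proof.
  intros h j j' hn hj. induction hj; intros hN.
  - apply h; auto.
  - pose proof (h m ltac:(lia) hN). pose proof (IHhj ltac:(lia)). lia.
Qed.

Lemma incr_R (k : nat -> R) N : (forall j, (S j < N)%nat -> k j < k (S j)) ->
  forall j j', (j < j')%nat -> (j' < N)%nat -> k j < k j'.
Proof.
  intros h j j' hj. induction hj; intros hN.
  - apply h; auto.
  - pose proof (h m hN). pose proof (IHhj ltac:(lia)). lra.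
Qed.

Lemma oint_order L m m' x y : 0 < INR L -> oint L m x -> oint L m' y -> (m < m')%nat -> x < y.
Proof.
  unfold oint. intros hL [h1 h2] [h3 h4] hm.
  assert (S m <= m')%nat by lia. apply le_INR in H. rewrite S_INR in H.
  pose proof PI_RGT_0.
  assert (2 * PI * INR m <= 2 * PI * (INR m' - 1)) by (apply Rmult_le_compat_l; lra).
  assert (x * INR L < y * INR L) by lra.
  apply (Rmult_lt_reg_r (INR L)); auto.
Qed.

Lemma sorted_idx L N U k Λ j j' m m' : 0 < U -> 8 / U < INR L ->
  sorted_real_solution L N U k Λ -> (j < j')%nat -> (j' < N)%nat ->
  oint L m (k j) -> oint L m' (k j') -> (m < m')%nat.
Proof.
  intros hU hLU [[hr [hd [he hp]]] hs] hj hj' ho ho'.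
  pose proof (L_pos L U hU hLU) as hL.
  pose proof (incr_R k N hs j j' hj hj') as hk.
  pose proof (oint_lt L m m' _ _ hL ho ho' hk).
  destruct (Nat.eq_dec m m') as [e|ne]; [|lia]. subst m'.
  exfalso.
  pose proof (sol_eq_index L U Λ (k j) m hU (he j ltac:(lia)) ho).
  pose proof (sol_eq_index L U Λ (k j') m hU (he j' hj') ho').
  assert (k j = k j') by (apply (gg_inj L U Λ); auto; congruence). lra.
Qed.

Definition Pm L N U (M n : nat) (t : nat -> nat) (k : nat -> R) (Λ : R) : Prop :=
  sorted_real_solution L N U k Λ /\
  (forall j, (j < n)%nat -> exists m, (1 <= m <= M)%nat /\ oint L m (k j)) /\
  (forall j, (n <= j)%nat -> (j < N)%nat -> oint L (t j) (k j)).

Lemma count_lemma L N U : 0 < U -> 8 / U < INR L -> (1 <= N)%nat ->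
  forall M, (M <= L)%nat -> forall n t, (n <= N)%nat ->
  (forall j, (n <= j)%nat -> (j < N)%nat -> (M < t j <= L)%nat) ->
  (forall j, (n <= j)%nat -> (S j < N)%nat -> (t j < t (S j))%nat) ->
  has_exactly N (binomial.binomial M n * (N - 1)) (Pm L N U M n t).
Proof.
  intros hU hLU hN. pose proof (L_pos L U hU hLU) as hL.
  induction M as [|M IH]; intros hM n t hn ht hti.
  all: destruct n as [|n].
  1,3:
    rewrite binomial.bin0, Nat.mul_1_l;
    assert (hl : forall j, (j < N)%nat -> (1 <= t j <= L)%nat) by (intros j hj; specialize (ht j ltac:(lia) hj); lia);
    assert (hdist : forall j j', (j < N)%nat -> (j' < N)%nat -> j <> j' -> t j <> t j')
      by (intros j j' hj hj' hne; destruct (Nat.lt_gt_cases j j') as [[h|h] _]; [auto| |];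
          [pose proof (incr_nat t 0 N hti j j' ltac:(lia) h hj') | pose proof (incr_nat t 0 N hti j' j ltac:(lia) h hj)]; lia);
    destruct (core L N U t hU hLU hN hl hdist) as [ks [Λs [h1 [h2 h3]]]];
    exists ks, Λs; split; [|split];
    [ intros i hi; destruct (h1 i hi) as [hr ho]; split; [split; [exact hr|]|split];
      [ intros j hj; apply (oint_order L (t j) (t (S j))); [exact hL | apply ho; lia | apply ho; lia | apply hti; lia]
      | intros j hj; lia
      | intros j _ hj; auto ]
    | intros i i' hi hi' hne [e _]; exact (h2 i i' hi hi' hne e)
    | intros k Λ [[hr _] [_ ho]]; apply h3; auto; intros j hj; apply ho; auto; lia ].
  -
    simpl binomial.binomial. apply he_zero. intros k Λ [_ [hp _]].
    destruct (hp 0%nat ltac:(lia)) as [m [hm _]]. lia.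
  -
    set (t' := fun j => if Nat.eqb j n then S M else t j).
    assert (E : (binomial.binomial (S M) (S n) * (N - 1) =
                 binomial.binomial M (S n) * (N - 1) + binomial.binomial M n * (N - 1))%nat).
    { rewrite binomial.binS. change (ssrnat.addn ?a ?b) with (a + b)%nat. lia. }
    rewrite E.
    apply (he_ext N _ (fun k Λ => Pm L N U M (S n) t k Λ \/ Pm L N U M n t' k Λ)).
    2: apply he_union.
    + intros k Λ. split.
      * intros [[hs hp] | [hs hp]].
        -- destruct hp as [hpre htl]. split; [exact hs|split; [|exact htl]].
           intros j hj. destruct (hpre j hj) as [m [hm ho]]. exists m. split; [lia|auto].
        -- destruct hp as [hpre htl]. split; [exact hs|split].
           ++ intros j hj. destruct (Nat.eq_dec j n) as [e|ne].
              ** subst j. exists (S M). split; [lia|]. specialize (htl n ltac:(lia) ltac:(lia)).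
                 unfold t' in htl. rewrite Nat.eqb_refl in htl. exact htl.
              ** destruct (hpre j ltac:(lia)) as [m [hm ho]]. exists m. split; [lia|auto].
           ++ intros j hj hjN. specialize (htl j ltac:(lia) hjN). unfold t' in htl.
              destruct (Nat.eqb_spec j n); [lia|]. exact htl.
      * intros [hs [hpre htl]].
        destruct (hpre n ltac:(lia)) as [m [hm ho]].
        destruct (Nat.eq_dec m (S M)) as [e|ne].
        -- right. split; [exact hs|split].
           ++ intros j hj. destruct (hpre j ltac:(lia)) as [m' [hm' ho']]. exists m'. split; [|auto].
              pose proof (sorted_idx L N U k Λ j n m' m hU hLU hs hj ltac:(lia) ho' ho). lia.
           ++ intros j hj hjN. unfold t'. destruct (Nat.eqb_spec j n).
              ** subst. auto.
              ** apply htl; lia.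
        -- left. split; [exact hs|split; [|exact htl]].
           intros j hj. destruct (Nat.eq_dec j n) as [e|ne2].
           ++ subst j. exists m. split; [lia|auto].
           ++ destruct (hpre j ltac:(lia)) as [m' [hm' ho']]. exists m'. split; [|auto].
              pose proof (sorted_idx L N U k Λ j n m' m hU hLU hs ltac:(lia) ltac:(lia) ho' ho). lia.
    + apply IH; auto; try lia.
      intros j hj hjN. specialize (ht j hj hjN). lia.
    + apply IH; auto; try lia.
      * intros j hj hjN. unfold t'. destruct (Nat.eqb_spec j n).
        -- lia.
        -- specialize (ht j ltac:(lia) hjN). lia.
      * intros j hj hjN. unfold t'. destruct (Nat.eqb_spec j n); destruct (Nat.eqb_spec (S j) n); try lia.
        -- subst j. specialize (ht (S n) ltac:(lia) hjN). lia.
        -- apply hti; lia.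
    + intros k k' Λ hkk [hs [hpre htl]] [hs' [hpre' htl']].
      destruct (hpre n ltac:(lia)) as [m [hm ho]].
      specialize (htl' n ltac:(lia) ltac:(lia)). unfold t' in htl'. rewrite Nat.eqb_refl in htl'.
      rewrite <- hkk in htl' by lia.
      pose proof (oint_unique L _ _ _ ho htl'). lia.
Qed.


Theorem mainTheorem2 (L N : nat) (U : R)
  (hN : (1 <= N)%nat) (hNL : (N <= L)%nat)
  (hU : 0 < U) (hLU : 8 / U < INR L) :
  has_exactly N (binomial.binomial L N * (N - 1))%nat (sorted_real_solution L N U)
  /\
  (forall l : nat -> nat,
     (forall j, (j < N)%nat -> (1 <= l j <= L)%nat) ->
     (forall j j', (j < N)%nat -> (j' < N)%nat -> j <> j' -> l j <> l j') ->
     exists (ks : nat -> nat -> R) (Λs : nat -> R),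
       (forall i, (i < N - 1)%nat ->
          real_solution L N U (ks i) (Λs i) /\
          forall j, (j < N)%nat -> in_interval L (l j) (ks i j)) /\
       (forall i i', (i < N - 1)%nat -> (i' < N - 1)%nat -> i <> i' -> Λs i <> Λs i') /\
       (forall k Λ, real_solution L N U k Λ ->
          (forall j, (j < N)%nat -> in_interval L (l j) (k j)) ->
          exists i, (i < N - 1)%nat /\ Λ = Λs i /\
                    forall j, (j < N)%nat -> k j = ks i j)).
Proof.
  pose proof (L_pos L U hU hLU) as hL.
  split.
  - apply (he_ext N _ (Pm L N U L N (fun _ => 0%nat))).
    + intros k Λ. split.
      * intros [hs _]. exact hs.
      * intros hs. split; [exact hs|split].
        -- intros j hj. destruct hs as [[hr [hd [he hp]]] _].
           destruct (comp_index L U Λ (k j) hU hLU (he j hj) (hr j hj)) as [m [hm [ho _]]].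
           exists m. auto.
        -- intros j h1 h2. lia.
    + apply count_lemma; auto; intros; lia.
  - intros l hl hd.
    destruct (core L N U l hU hLU hN hl hd) as [ks [Λs [h1 [h2 h3]]]].
    exists ks, Λs. split; [|split]; auto.
    + intros i hi. destruct (h1 i hi) as [hr ho]. split; auto.
      intros j hj. apply oint_closed; auto.
    + intros k Λ hr hin. apply h3; auto. intros j hj.
      destruct hr as [hr [hd' [he hp]]].
      destruct (comp_index L U Λ (k j) hU hLU (he j hj) (hr j hj)) as [m [hm [ho _]]].
      rewrite (closed_oint L (l j) m (k j) hL (hin j hj) ho). exact ho.
Qed.
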